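(* Let $\mathrm W_\Omega$ be the Whitney decomposition of $\Omega=\mathbb G\setminus\mathbb A$ into dyadic rectangles as described below. For $Q\in\mathrm W_\Omega$ let $Q^*$ be the union of all rectangles of $\mathrm W_\Omega$ touching $Q$, and $Q^{**}$ the union of all rectangles of $\mathrm W_\Omega$ touching $Q^*$. Then there are $L\ge1$ and $N'\in\mathbb N$ such that for every $Q\in\mathrm W_\Omega$ the set $Q^{**}$, with the metric $d_{cc}$, admits an $L$-bi-Lipschitz embedding into $\mathbb R^{N'}$.
   Context: The Grushin plane $\mathbb G$ is $\mathbb R^2$ with horizontal distribution spanned by $X_1=\partial_x$ and $X_2=x\,\partial_y$, with Carnot–Carathéodory distance $d_{cc}$ (infimum of $\int_0^1\sqrt{a^2+b^2}\,dt$ over absolutely continuous curves $(\mathrm x,\mathrm y)$ with $\mathrm x'=a$, $\mathrm y'=\mathrm x\,b$ joining the points). $\mathbb A=\{0\}\times\mathbb R$. $\mathrm W_\Omega$ is a family of rectangles from the meshes $M_j=2^{-j}M_0\times2^{-2j}M_0$ ($M_0$ the unit square lattice mesh, so $M_j$ consists of rectangles $[2^{-j}m,2^{-j}(m+1)]\times[2^{-2j}n,2^{-2j}(n+1)]$), with union $\Omega=\mathbb G\setminus\mathbb A$, pairwise disjoint interiors, and $\operatorname{dist}_{cc}(Q,\mathbb A)\le\operatorname{diam}_{cc}(Q)\le 8\operatorname{dist}_{cc}(Q,\mathbb A)$. *)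

(* Defs.v *)
From Stdlib Require Import Reals Lra List ClassicalEpsilon.
Open Scope R_scope.

Definition pt := (R * R)%type.

(* Infimum / supremum of a set of reals (chosen by classical choice; they
   are only used for sets where they exist). *)
Definition is_lower_bound (E : R -> Prop) (m : R) : Prop := forall x, E x -> m <= x.
Definition is_glb (E : R -> Prop) (m : R) : Prop :=
  is_lower_bound E m /\ (forall b, is_lower_bound E b -> b <= m).
Definition Rinf (E : R -> Prop) : R := epsilon (inhabits 0) (fun m => is_glb E m).
Definition Rsup (E : R -> Prop) : R := epsilon (inhabits 0) (fun m => is_lub E m).

Definition horizontal_length (p q : pt) (l : R) : Prop :=
  exists (a b X Y : R -> R),
    continuity a /\ continuity b /\
    (forall t, derivable_pt_lim X t (a t)) /\
    (forall t, derivable_pt_lim Y t (X t * b t)) /\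
    X 0 = fst p /\ Y 0 = snd p /\ X 1 = fst q /\ Y 1 = snd q /\
    exists pr : Riemann_integrable (fun t => sqrt (a t ^ 2 + b t ^ 2)) 0 1,
      RiemannInt pr = l.

Definition dcc (p q : pt) : R := Rinf (horizontal_length p q).

Definition in_A (p : pt) : Prop := fst p = 0.

(* Dyadic rectangles of the meshes M_j = 2^-j M0 x 2^-2j M0, indexed by
   (j, m, n) in Z^3:  [2^-j m, 2^-j (m+1)] x [2^-2j n, 2^-2j (n+1)]. *)
Definition rindex := (Z * Z * Z)%type.
Definition sx (i : rindex) : R := powerRZ 2 (- fst (fst i)).
Definition sy (i : rindex) : R := powerRZ 2 (- 2 * fst (fst i)).
Definition in_rect (i : rindex) (p : pt) : Prop :=
  sx i * IZR (snd (fst i)) <= fst p <= sx i * (IZR (snd (fst i)) + 1) /\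
  sy i * IZR (snd i) <= snd p <= sy i * (IZR (snd i) + 1).
Definition in_rect_interior (i : rindex) (p : pt) : Prop :=
  sx i * IZR (snd (fst i)) < fst p < sx i * (IZR (snd (fst i)) + 1) /\
  sy i * IZR (snd i) < snd p < sy i * (IZR (snd i) + 1).

Definition diam_cc (S : pt -> Prop) : R :=
  Rsup (fun d => exists p q, S p /\ S q /\ d = dcc p q).
Definition dist_cc (S T : pt -> Prop) : R :=
  Rinf (fun d => exists p q, S p /\ T q /\ d = dcc p q).

Definition whitney_family (W : rindex -> Prop) : Prop :=
  (forall p : pt, ~ in_A p <-> exists i, W i /\ in_rect i p) /\
  (forall i k p, W i -> W k -> i <> k ->
     in_rect_interior i p -> in_rect_interior k p -> False) /\
  (forall i, W i ->
     dist_cc (in_rect i) in_A <= diam_cc (in_rect i) /\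
     diam_cc (in_rect i) <= 8 * dist_cc (in_rect i) in_A).

(* Q* : union of rectangles of W touching (= intersecting) the set S. *)
Definition touching_union (W : rindex -> Prop) (S : pt -> Prop) (p : pt) : Prop :=
  exists k, W k /\ (exists z, in_rect k z /\ S z) /\ in_rect k p.
Definition Qstar (W : rindex -> Prop) (i : rindex) : pt -> Prop :=
  touching_union W (in_rect i).
Definition Qstarstar (W : rindex -> Prop) (i : rindex) : pt -> Prop :=
  touching_union W (Qstar W i).

(* Euclidean distance in R^N (vectors as nat -> R, coordinates 0..N-1). *)
Definition eucl_dist (N : nat) (u v : nat -> R) : R :=
  sqrt (fold_right Rplus 0 (map (fun k => (u k - v k) ^ 2) (seq 0 N))).

Definition bilipschitz_embedding (L : R) (N : nat) (S : pt -> Prop)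
  (f : pt -> nat -> R) : Prop :=
  forall p q, S p -> S q ->
    / L * dcc p q <= eucl_dist N (f p) (f q) /\
    eucl_dist N (f p) (f q) <= L * dcc p q.

(* Main.v *)
Require Import Defs.
From Stdlib Require Import Reals.
From Stdlib Require Import Lra Lia Classical ClassicalEpsilon.
From Coquelicot Require Import Coquelicot.
Open Scope R_scope.

Lemma cont_sq (a : R -> R) x : continuity_pt a x -> continuity_pt (fun t => a t ^ 2) x.
Proof.
  intro H. apply (continuity_pt_comp a (fun u => u ^ 2)); auto.
  apply derivable_continuous_pt. apply derivable_pt_pow.
Qed.

Lemma cont_g (a b : R -> R) : continuity a -> continuity b ->
  forall x, continuous (fun t => sqrt (a t ^ 2 + b t ^ 2)) x.
Proof.
  intros Ha Hb x. apply continuity_pt_filterlim.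
  apply (continuity_pt_comp (fun t => a t ^ 2 + b t ^ 2) sqrt).
  - apply continuity_pt_plus; apply cont_sq; auto.
  - apply continuity_pt_sqrt. nra.
Qed.

Lemma exRc (f : R -> R) u v : (forall z, continuous f z) -> ex_RInt f u v.
Proof. intro H. apply (@ex_RInt_continuous R_CompleteNormedModule). intros; apply H. Qed.

Lemma curve_analysis (a b X Y : R -> R) :
  continuity a -> continuity b ->
  (forall t, derivable_pt_lim X t (a t)) ->
  (forall t, derivable_pt_lim Y t (X t * b t)) ->
  forall pr : Riemann_integrable (fun t => sqrt (a t ^ 2 + b t ^ 2)) 0 1,
  0 <= RiemannInt pr /\
  (forall t, 0 <= t <= 1 -> Rabs (X t - X 0) <= RiemannInt pr) /\
  (forall M, (forall t, 0 <= t <= 1 -> Rabs (X t) <= M) ->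
     Rabs (Y 1 - Y 0) <= M * RiemannInt pr).
Proof.
  intros Ha Hb HX HY pr.
  set (g := fun t => sqrt (a t ^ 2 + b t ^ 2)).
  rewrite <- (RInt_Reals g 0 1 pr).
  assert (Hg : forall x, continuous g x) by (apply cont_g; auto).
  assert (Hgi : forall u v, ex_RInt g u v) by (intros; apply exRc; auto).
  assert (Hg0 : forall t, 0 <= g t) by (intro; apply sqrt_pos).
  assert (Hac : forall x, continuous a x) by (intro; apply continuity_pt_filterlim; apply Ha).
  assert (Hbc : forall x, continuous b x) by (intro; apply continuity_pt_filterlim; apply Hb).
  assert (HXc : forall x, continuous X x).
  { intro x. apply (@ex_derive_continuous R_AbsRing R_NormedModule). exists (a x). apply is_derive_Reals. apply HX. }
  assert (Hab : forall t, Rabs (a t) <= g t).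
  { intro t. unfold g. rewrite <- sqrt_Rsqr_abs. apply sqrt_le_1_alt. unfold Rsqr. nra. }
  assert (Hbb : forall t, Rabs (b t) <= g t).
  { intro t. unfold g. rewrite <- sqrt_Rsqr_abs. apply sqrt_le_1_alt. unfold Rsqr. nra. }
  assert (Hpos : forall u v, u <= v -> 0 <= RInt g u v).
  { intros u v Huv. apply RInt_ge_0; auto. }
  split; [apply Hpos; lra|]. split.
  - intros t Ht.
    assert (E : RInt a 0 t = X t - X 0).
    { apply is_RInt_unique. apply (is_RInt_derive X a).
      - intros; apply is_derive_Reals; apply HX.
      - intros; apply Hac. }
    rewrite <- E.
    apply Rle_trans with (RInt (fun u => Rabs (a u)) 0 t).
    { apply abs_RInt_le; [lra|]. apply exRc; auto. }
    apply Rle_trans with (RInt g 0 t).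
    { apply RInt_le; [lra | apply exRc; intros; apply continuous_comp; [auto|apply continuous_Rabs] | apply Hgi | intros; apply Hab]. }
    rewrite <- (RInt_Chasles g 0 t 1); [|apply Hgi|apply Hgi].
    pose proof (Hpos t 1 (proj2 Ht)). change (RInt g 0 t <= RInt g 0 t + RInt g t 1). lra.
  - intros M HM.
    assert (E : RInt (fun t => X t * b t) 0 1 = Y 1 - Y 0).
    { apply is_RInt_unique. apply (is_RInt_derive Y (fun t => X t * b t)).
      - intros; apply is_derive_Reals; apply HY.
      - intros. apply (continuous_mult X b); auto. }
    rewrite <- E.
    assert (Hxb : forall x, continuous (fun t => X t * b t) x).
    { intros. apply (continuous_mult X b); auto. }
    apply Rle_trans with (RInt (fun u => Rabs (X u * b u)) 0 1).
    { apply abs_RInt_le; [lra|]. apply exRc; auto. }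
    apply Rle_trans with (RInt (fun u => M * g u) 0 1).
    { apply RInt_le; [lra | | |].
      - apply exRc. intros. apply continuous_comp; [apply Hxb|].
        apply continuous_Rabs.
      - apply exRc. intros. apply (continuous_mult (fun _ => M) g); [apply continuous_const| apply Hg].
      - intros x Hx. rewrite Rabs_mult. change (Rabs (X x) * Rabs (b x) <= M * g x).
        apply Rmult_le_compat; [apply Rabs_pos|apply Rabs_pos| apply HM; lra | apply Hbb]. }
    pose proof (@RInt_scal R_CompleteNormedModule g 0 1 M (Hgi 0 1)) as HS. change (RInt (fun u => M * g u) 0 1 <= M * RInt g 0 1). change (RInt (fun u => M * g u) 0 1 = M * RInt g 0 1) in HS. rewrite HS. apply Rle_refl.
Qed.

Lemma Rinf_glb (E : R -> Prop) : (exists x, E x) -> (exists m, is_lower_bound E m) ->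
  is_glb E (Rinf E).
Proof.
  intros [x Ex] [m Hm]. unfold Rinf. apply epsilon_spec.
  destruct (completeness (fun y => E (- y))) as [M [HM1 HM2]].
  - exists (- m). intros y Ey. apply Hm in Ey. lra.
  - exists (- x). rewrite Ropp_involutive. exact Ex.
  - exists (- M). split.
    + intros z Ez. assert (z' : E (- - z)) by (rewrite Ropp_involutive; exact Ez).
      apply HM1 in z'. lra.
    + intros b Hb. assert (M <= - b); [|lra].
      apply HM2. intros y Ey. apply Hb in Ey. lra.
Qed.

Lemma Rsup_lub (E : R -> Prop) : (exists x, E x) -> (exists m, is_upper_bound E m) ->
  is_lub E (Rsup E).
Proof.
  intros He Hb. unfold Rsup. apply epsilon_spec.
  destruct (completeness E Hb He) as [M HM]. exists M; exact HM.
Qed.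

Lemma hl_nonneg p q l : horizontal_length p q l -> 0 <= l.
Proof.
  intros (a & b & X & Y & Ha & Hb & HX & HY & _ & _ & _ & _ & pr & <-).
  apply (curve_analysis a b X Y Ha Hb HX HY pr).
Qed.

Lemma hl_dx p q l : horizontal_length p q l -> Rabs (fst q - fst p) <= l.
Proof.
  intros (a & b & X & Y & Ha & Hb & HX & HY & H0 & _ & H1 & _ & pr & <-).
  rewrite <- H0, <- H1.
  apply (curve_analysis a b X Y Ha Hb HX HY pr). lra.
Qed.

Lemma curve_exists (x1 y1 x2 y2 : R) : x1 + x2 <> 0 ->
  horizontal_length (x1, y1) (x2, y2)
    (sqrt ((x2 - x1) ^ 2 + (2 * (y2 - y1) / (x1 + x2)) ^ 2)).
Proof.
  intros Hs. set (b0 := 2 * (y2 - y1) / (x1 + x2)).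
  exists (fun _ => x2 - x1), (fun _ => b0), (fun t => x1 + (x2 - x1) * t),
    (fun t => y1 + b0 * (x1 * t + (x2 - x1) * t ^ 2 / 2)).
  split; [apply continuity_const; intros u v; reflexivity|].
  split; [apply continuity_const; intros u v; reflexivity|].
  split. { intro t. apply is_derive_Reals. auto_derive; [trivial|ring]. }
  split. { intro t. apply is_derive_Reals. auto_derive; [trivial|field]. }
  cbv beta. simpl fst; simpl snd. split; [field|]. split; [field|]. split; [field|]. split.
  { unfold b0. field. exact Hs. }
  assert (pr : Riemann_integrable (fun t : R => sqrt ((x2 - x1) ^ 2 + b0 ^ 2)) 0 1).
  { apply continuity_implies_RiemannInt; [lra|]. intros. apply continuity_pt_const.
    intros u v; reflexivity. }
  exists pr. rewrite <- RInt_Reals. rewrite RInt_const.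
  change (scal (1 - 0) (sqrt ((x2 - x1) ^ 2 + b0 ^ 2))) with
    ((1 - 0) * (sqrt ((x2 - x1) ^ 2 + b0 ^ 2))). ring.
Qed.

Lemma hl_nonempty (p q : pt) : fst p + fst q <> 0 -> exists l, horizontal_length p q l.
Proof.
  destruct p as [x1 y1], q as [x2 y2]; simpl; intro H.
  eexists; apply curve_exists; exact H.
Qed.

Lemma dcc_le p q l : horizontal_length p q l -> dcc p q <= l.
Proof.
  intro H. destruct (Rinf_glb (horizontal_length p q)) as [H1 _].
  - exists l; exact H.
  - exists 0. intros x Hx. eapply hl_nonneg; eauto.
  - apply H1; exact H.
Qed.

Lemma dcc_ge p q B : fst p + fst q <> 0 ->
  (forall l, horizontal_length p q l -> B <= l) -> B <= dcc p q.
Proof.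
  intros Hs HB. destruct (Rinf_glb (horizontal_length p q)) as [_ H2].
  - apply hl_nonempty; exact Hs.
  - exists 0. intros x Hx. eapply hl_nonneg; eauto.
  - apply H2. exact HB.
Qed.

Lemma dcc_upper (x1 y1 x2 y2 : R) : x1 + x2 <> 0 ->
  dcc (x1, y1) (x2, y2) <= sqrt ((x2 - x1) ^ 2 + (2 * (y2 - y1) / (x1 + x2)) ^ 2).
Proof. intro H. apply dcc_le. apply curve_exists; exact H. Qed.

Lemma dcc_dx p q : fst p + fst q <> 0 -> Rabs (fst q - fst p) <= dcc p q.
Proof. intro H. apply dcc_ge; auto. intros l Hl. eapply hl_dx; eauto. Qed.

Lemma abs_sq u c : Rabs u <= c -> u * u <= c * c.
Proof. unfold Rabs; destruct (Rcase_abs u); intros; nra. Qed.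

Lemma sqrt_le_bound A B : 0 <= B -> A <= B * B -> sqrt A <= B.
Proof.
  intros HB HA. rewrite <- (sqrt_square B HB). apply sqrt_le_1_alt. exact HA.
Qed.

Lemma sqrt_le_k A B k : 0 <= k -> 0 <= B -> A <= k * k * B -> sqrt A <= k * sqrt B.
Proof.
  intros Hk HB HA. rewrite <- (sqrt_square k Hk), <- sqrt_mult_alt by nra.
  apply sqrt_le_1_alt. exact HA.
Qed.

Lemma ratio_bound d u v e : 0 < d -> d <= Rabs u -> Rabs v <= e ->
  Rabs (2 * v / u) * d <= 2 * e.
Proof.
  intros Hd Hu Hv.
  assert (Hu0 : u <> 0) by (intro; subst; rewrite Rabs_R0 in Hu; lra).
  assert (E : 2 * v = (2 * v / u) * u) by (field; exact Hu0).
  assert (E2 : Rabs (2 * v) = Rabs (2 * v / u) * Rabs u) by (rewrite E at 1; apply Rabs_mult).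
  rewrite Rabs_mult, (Rabs_pos_eq 2) in E2 by lra.
  pose proof (Rabs_pos (2 * v / u)).
  assert (Rabs (2 * v / u) * d <= Rabs (2 * v / u) * Rabs u) by (apply Rmult_le_compat_l; lra).
  lra.
Qed.

Lemma absdiv u s c : 0 < s -> Rabs u <= c * s -> Rabs (u / s) <= c.
Proof.
  intros Hs H.
  assert (E : u = (u / s) * s) by (field; lra).
  assert (E2 : Rabs u = Rabs (u / s) * s).
  { rewrite E at 1. rewrite Rabs_mult, (Rabs_pos_eq s) by lra. reflexivity. }
  apply Rmult_le_reg_r with s; lra.
Qed.

Lemma sx_pos k : 0 < sx k.
Proof. unfold sx. apply powerRZ_lt. lra. Qed.

Lemma sy_sq k : sy k = sx k * sx k.
Proof.
  unfold sy, sx. rewrite <- powerRZ_add by lra. f_equal. lia.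
Qed.

Lemma rect_pair k p q : in_rect k p -> in_rect k q ->
  Rabs (fst q - fst p) <= sx k /\ Rabs (snd q - snd p) <= sx k * sx k.
Proof.
  destruct k as [[j m] n]. unfold in_rect. rewrite sy_sq. simpl.
  intros [[? ?] [? ?]] [[? ?] [? ?]]. split; apply Rabs_le; nra.
Qed.

Lemma rect_point k : in_rect k (sx k * IZR (snd (fst k)), sy k * IZR (snd k)).
Proof.
  pose proof (sx_pos k). assert (0 < sy k) by (rewrite sy_sq; nra).
  unfold in_rect; simpl. nra.
Qed.

Lemma whitney_contra W k sg c : whitney_family W -> W k -> (sg = 1 \/ sg = -1) ->
  2 * sx k <= c -> (forall p, in_rect k p -> c <= sg * fst p) -> False.
Proof.
  intros [H1 [H2 H3]] Wk Hsg Hc Hp.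
  destruct (H3 k Wk) as [Hd _].
  set (s := sx k) in *. assert (Hs : 0 < s) by apply sx_pos.
  assert (Habs : forall x, sg * x <= Rabs x).
  { intro x. unfold Rabs; destruct (Rcase_abs x); destruct Hsg; subst; lra. }
  assert (Hdist : c <= dist_cc (in_rect k) in_A).
  { unfold dist_cc.
    destruct (Rinf_glb (fun d => exists p q, in_rect k p /\ in_A q /\ d = dcc p q))
      as [_ G].
    - eexists; exists (sx k * IZR (snd (fst k)), sy k * IZR (snd k)), (0, 0).
      split; [apply rect_point|]. split; [reflexivity|reflexivity].
    - exists c. intros d (p & q & Hp' & Hq & ->). unfold in_A in Hq.
      pose proof (Hp p Hp').
      assert (Rabs (fst q - fst p) <= dcc p q) by (apply dcc_dx; rewrite Hq; nra).
      rewrite Hq in H0. pose proof (Habs (fst p)).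
      rewrite Rabs_minus_sym, Rminus_0_r in H0. lra.
    - apply G. intros d (p & q & Hp' & Hq & ->). unfold in_A in Hq.
      pose proof (Hp p Hp').
      assert (Rabs (fst q - fst p) <= dcc p q) by (apply dcc_dx; rewrite Hq; nra).
      rewrite Hq in H0. pose proof (Habs (fst p)).
      rewrite Rabs_minus_sym, Rminus_0_r in H0. lra. }
  assert (Hdiam : diam_cc (in_rect k) <= 3 * s / 2).
  { unfold diam_cc.
    assert (UB : forall p q, in_rect k p -> in_rect k q -> dcc p q <= 3 * s / 2).
    { intros [x1 y1] [x2 y2] Hp1 Hq1.
      pose proof (Hp _ Hp1) as A1. pose proof (Hp _ Hq1) as A2. simpl in A1, A2.
      destruct (rect_pair _ _ _ Hp1 Hq1) as [Bx By]. simpl in Bx, By. fold s in Bx, By.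
      assert (Hsum : 2 * c <= Rabs (x1 + x2)) by (pose proof (Habs (x1 + x2)); lra).
      eapply Rle_trans; [apply dcc_upper; intro Z; rewrite Z, Rabs_R0 in Hsum; lra|].
      apply sqrt_le_bound; [lra|].
      pose proof (ratio_bound (2 * c) (x1 + x2) (y2 - y1) (s * s) ltac:(lra) Hsum By) as R1.
      set (r := 2 * (y2 - y1) / (x1 + x2)) in *.
      pose proof (Rabs_pos r).
      assert (Rabs r <= s / 2) by nra.
      assert (r * r <= (s/2) * (s/2)) by (apply abs_sq; lra).
      assert ((x2 - x1) * (x2 - x1) <= s * s) by (apply abs_sq; lra).
      replace ((x2 - x1) ^ 2 + r ^ 2) with ((x2 - x1) * (x2 - x1) + r * r) by ring.
      nra. }
    destruct (Rsup_lub (fun d => exists p q, in_rect k p /\ in_rect k q /\ d = dcc p q))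
      as [_ G].
    - eexists; exists (sx k * IZR (snd (fst k)), sy k * IZR (snd k)),
        (sx k * IZR (snd (fst k)), sy k * IZR (snd k)).
      split; [apply rect_point|]. split; [apply rect_point|reflexivity].
    - exists (3 * s / 2). intros d (p & q & Hp' & Hq & ->). apply UB; auto.
    - apply G. intros d (p & q & Hp' & Hq & ->). apply UB; auto. }
  lra.
Qed.

Lemma whitney_rect W k : whitney_family W -> W k ->
  exists sg s y0, (sg = 1 \/ sg = -1) /\ 0 < s /\
    forall p, in_rect k p -> s <= sg * fst p <= 2 * s /\ y0 <= snd p <= y0 + s * s.
Proof.
  intros HW Wk. pose proof (sx_pos k) as Hs.
  destruct k as [[j m] n].
  assert (Hm : (m >= 2 \/ m <= -3 \/ m = 0 \/ m = -1 \/ m = 1 \/ m = -2)%Z) by lia.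
  destruct Hm as [Hm|[Hm|[Hm|[Hm|[Hm|Hm]]]]].
  - exfalso. apply (whitney_contra W (j, m, n) 1 (sx (j, m, n) * IZR m) HW Wk); [left; reflexivity| |].
    + apply IZR_ge in Hm. nra.
    + intros p [[A _] _]. simpl in A. lra.
  - exfalso. apply (whitney_contra W (j, m, n) (-1) (- (sx (j, m, n) * (IZR m + 1))) HW Wk);
      [right; reflexivity| |].
    + apply IZR_le in Hm. nra.
    + intros p [[_ A] _]. simpl in A. lra.
  - exfalso. subst m. destruct HW as [H1 _].
    assert (Hp : in_rect (j, 0%Z, n) (0, sy (j, 0%Z, n) * IZR n)).
    { pose proof (rect_point (j, 0%Z, n)) as R. unfold in_rect in *; simpl in *. nra. }
    apply (proj2 (H1 (0, sy (j, 0%Z, n) * IZR n))); [exists (j, 0%Z, n); split; assumption | reflexivity].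
  - exfalso. subst m. destruct HW as [H1 _].
    assert (Hp : in_rect (j, (-1)%Z, n) (0, sy (j, (-1)%Z, n) * IZR n)).
    { pose proof (rect_point (j, (-1)%Z, n)) as R. unfold in_rect in *; simpl in *. nra. }
    apply (proj2 (H1 (0, sy (j, (-1)%Z, n) * IZR n))); [exists (j, (-1)%Z, n); split; assumption | reflexivity].
  - subst m. exists 1, (sx (j, 1%Z, n)), (sy (j, 1%Z, n) * IZR n).
    split; [left; reflexivity|]. split; [exact Hs|].
    intros p [[A B] [C D]]. simpl in A, B. rewrite sy_sq in C, D |- *. simpl in C, D. nra.
  - subst m. exists (-1), (sx (j, (-2)%Z, n)), (sy (j, (-2)%Z, n) * IZR n).
    split; [right; reflexivity|]. split; [exact Hs|].
    intros p [[A B] [C D]]. simpl in A, B. rewrite sy_sq in C, D |- *. simpl in C, D. nra.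
Qed.

Lemma region W i : whitney_family W -> W i ->
  exists sg s y0, (sg = 1 \/ sg = -1) /\ 0 < s /\
    forall p, Qstarstar W i p -> s / 4 <= sg * fst p <= 8 * s /\ Rabs (snd p - y0) <= 21 * (s * s).
Proof.
  intros HW Wi.
  destruct (whitney_rect W i HW Wi) as (sg & s & y0 & Hsg & Hs & Hi).
  exists sg, s, y0. split; [exact Hsg|]. split; [exact Hs|].
  intros p (k' & Wk' & (z' & Hk'z' & Hz') & Hk'p).
  destruct Hz' as (k & Wk & (z & Hkz & Hiz) & Hkz').
  destruct (whitney_rect W k HW Wk) as (sk & tk & yk & Hsk & Htk & Hk).
  destruct (whitney_rect W k' HW Wk') as (sk' & tk' & yk' & Hsk' & Htk' & Hk').
  pose proof (Hi z Hiz) as [Z1 Z2].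
  pose proof (Hk z Hkz) as [Z3 Z4].
  pose proof (Hk z' Hkz') as [Z5 Z6].
  pose proof (Hk' z' Hk'z') as [Z7 Z8].
  pose proof (Hk' p Hk'p) as [Z9 Z10].
  assert (sk = sg) by (destruct Hsg, Hsk; subst; lra). subst sk.
  assert (sk' = sg) by (destruct Hsg, Hsk'; subst; lra). subst sk'.
  assert (T1 : tk <= 2 * s /\ s <= 2 * tk) by (destruct Hsg; subst; lra).
  assert (T2 : tk' <= 2 * tk /\ tk <= 2 * tk') by (destruct Hsg; subst; lra).
  assert (Q1 : tk * tk <= 4 * (s * s)) by nra.
  assert (Q2 : tk' * tk' <= 16 * (s * s)) by nra.
  split; [lra|]. apply Rabs_le. lra.
Qed.

Theorem lemma4p8 (W : rindex -> Prop) (HW : whitney_family W) :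
  exists (L : R) (N' : nat), 1 <= L /\
    forall i : rindex, W i ->
      exists f : pt -> nat -> R, bilipschitz_embedding L N' (Qstarstar W i) f.
Proof.
  exists 17, 2%nat. split; [lra|]. intros i Wi.
  destruct (region W i HW Wi) as (sg & s & y0 & Hsg & Hs & Hreg).
  exists (fun p n => match n with O => fst p | _ => snd p / s end).
  intros [x1 y1] [x2 y2] Hp Hq.
  destruct (Hreg _ Hp) as [P1 P2]. destruct (Hreg _ Hq) as [Q1 Q2]. simpl in P1, P2, Q1, Q2.
  set (w := (y1 - y2) / s).
  assert (Heu : eucl_dist 2 (fun n => match n with O => fst (x1, y1) | _ => snd (x1, y1) / s end)
                  (fun n => match n with O => fst (x2, y2) | _ => snd (x2, y2) / s end)
              = sqrt ((x1 - x2) * (x1 - x2) + w * w)).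
  { unfold eucl_dist. simpl. f_equal. unfold w. field. lra. }
  rewrite Heu. set (E := sqrt ((x1 - x2) * (x1 - x2) + w * w)).
  assert (HE : 0 <= E) by apply sqrt_pos.
  assert (Hdy : Rabs (y1 - y2) <= 42 * s * s).
  { replace (y1 - y2) with ((y1 - y0) - (y2 - y0)) by ring.
    eapply Rle_trans; [apply Rabs_triang|]. rewrite Rabs_Ropp. lra. }
  assert (Hsum : s / 2 <= Rabs (x1 + x2)).
  { apply Rle_trans with (sg * (x1 + x2)); [lra|].
    unfold Rabs; destruct (Rcase_abs (x1 + x2)); destruct Hsg; subst; lra. }
  assert (Hnz : x1 + x2 <> 0) by (intro Z; rewrite Z, Rabs_R0 in Hsum; lra).
  assert (Hyw : y1 - y2 = w * s) by (unfold w; field; lra).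
  split.
  -
    assert (Hup : dcc (x1, y1) (x2, y2) <= 4 * E).
    { eapply Rle_trans; [apply dcc_upper; exact Hnz|].
      unfold E. apply sqrt_le_k; [lra| pose proof (Rle_0_sqr (x1 - x2)); pose proof (Rle_0_sqr w); unfold Rsqr in *; lra |].
      assert (Rv : Rabs (y2 - y1) <= Rabs w * s).
      { rewrite Rabs_minus_sym, Hyw, Rabs_mult, (Rabs_pos_eq s) by lra. lra. }
      pose proof (ratio_bound (s / 2) (x1 + x2) (y2 - y1) (Rabs w * s) ltac:(lra) Hsum Rv) as R1.
      set (r := 2 * (y2 - y1) / (x1 + x2)) in *.
      pose proof (Rabs_pos r). pose proof (Rabs_pos w).
      assert (Rabs r <= 4 * Rabs w) by nra.
      assert (r * r <= (4 * Rabs w) * (4 * Rabs w)) by (apply abs_sq; lra).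
      assert (Rabs w * Rabs w = w * w) by (rewrite <- Rabs_mult; apply Rabs_pos_eq; nra).
      replace ((x2 - x1) ^ 2 + r ^ 2) with ((x1 - x2) * (x1 - x2) + r * r) by ring.
      pose proof (Rle_0_sqr (x1 - x2)). unfold Rsqr in *. lra. }
    lra.
  -
    assert (Hlow : / 17 * E <= dcc (x1, y1) (x2, y2)).
    { apply dcc_ge; [exact Hnz|].
      intros l (a & b & X & Y & Ha & Hb & HX & HY & H0 & H0' & H1 & H1' & pr & Hl).
      simpl in H0, H0', H1, H1'.
      destruct (curve_analysis a b X Y Ha Hb HX HY pr) as (L0 & L1 & L2).
      rewrite Hl in L0, L1, L2.
      assert (E <= 17 * l); [|lra].
      unfold E. apply sqrt_le_bound; [lra|].
      destruct (classic (forall t, 0 <= t <= 1 -> Rabs (X t) <= 16 * s)) as [Hin|Hout].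
      + pose proof (L2 _ Hin) as Ly. rewrite H1', H0' in Ly.
        pose proof (L1 1 ltac:(lra)) as Lx. rewrite H1, H0 in Lx.
        assert (Rabs w <= 16 * l).
        { unfold w. apply absdiv; [exact Hs|]. rewrite Rabs_minus_sym. lra. }
        assert (w * w <= (16 * l) * (16 * l)) by (apply abs_sq; lra).
        assert ((x1 - x2) * (x1 - x2) <= l * l) by (apply abs_sq; rewrite Rabs_minus_sym; lra).
        pose proof (Rle_0_sqr l). unfold Rsqr in *. lra.
      + apply not_all_ex_not in Hout. destruct Hout as [t Ht].
        apply imply_to_and in Ht. destruct Ht as [Ht1 Ht2]. apply Rnot_le_lt in Ht2.
        pose proof (L1 t Ht1) as Lt. rewrite H0 in Lt.
        assert (Rabs x1 <= 8 * s) by (apply Rabs_le; destruct Hsg; subst; lra).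
        assert (Rabs (X t) <= Rabs (X t - x1) + Rabs x1).
        { replace (X t) with ((X t - x1) + x1) at 1 by ring. apply Rabs_triang. }
        assert (8 * s <= l) by lra.
        assert (Rabs w <= 42 * s) by (unfold w; apply absdiv; lra).
        assert (w * w <= (42 * s) * (42 * s)) by (apply abs_sq; lra).
        assert ((x1 - x2) * (x1 - x2) <= (8 * s) * (8 * s))
          by (apply abs_sq; apply Rabs_le; destruct Hsg; subst; lra).
        nra. }
    lra.
Qed.
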